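(* For every two-qubit density matrix $\sigma$ there exists a single-qubit unitary $U$ such that $$\bar F_{\mathrm{dummy}}=\bar F_{\mathrm{trap}}=F_{\mathrm{tel}}(\sigma),$$ where $\bar F_{\mathrm{dummy}}=\tfrac12\big(\langle 0|\Lambda_{\sigma,U}(|0\rangle\langle0|)|0\rangle+\langle 1|\Lambda_{\sigma,U}(|1\rangle\langle1|)|1\rangle\big)$, $\bar F_{\mathrm{trap}}=\tfrac18\sum_{\theta\in\Theta}\langle+_\theta|\Lambda_{\sigma,U}(|+_\theta\rangle\langle+_\theta|)|+_\theta\rangle$, and $F_{\mathrm{tel}}(\sigma)=\int\langle\psi|\Lambda_\sigma(|\psi\rangle\langle\psi|)|\psi\rangle\,d\psi$ with the integral over the Haar (uniform) measure on single-qubit pure states.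
   Context: $\Theta=\{i\pi/4\}_{0\le i\le7}$ and $|\pm_\theta\rangle=\frac1{\sqrt2}(|0\rangle\pm e^{i\theta}|1\rangle)$. Let $|\Phi^+\rangle=\frac1{\sqrt2}(|00\rangle+|11\rangle)$ and $|\Phi_{ij}\rangle=(X^iZ^j\otimes\mathbf 1)|\Phi^+\rangle$ for $i,j\in\{0,1\}$. For a two-qubit state $\sigma$ on registers $S$ (sender) and $R$ (receiver), the teleportation channel is $\Lambda_\sigma(\rho)=\sum_{i,j\in\{0,1\}}X^iZ^j\,\langle\Phi_{ij}|_{IS}(\rho_I\otimes\sigma_{SR})|\Phi_{ij}\rangle_{IS}\,(X^iZ^j)^\dagger$. For a single-qubit unitary $U$, the rotated teleportation channel is $\Lambda_{\sigma,U}(\rho)=U^\dagger\Lambda_\sigma(U\rho U^\dagger)U$. *)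

(* Defs.v *)
From HB Require Import structures.
From mathcomp Require Import all_boot all_order all_algebra.
From mathcomp Require Import all_classical all_reals all_analysis.
From mathcomp Require Import complex mxtens.

Set Implicit Arguments.
Unset Strict Implicit.
Unset Printing Implicit Defensive.

Import Order.TTheory GRing.Theory Num.Theory.
Local Open Scope ring_scope.
Local Open Scope complex_scope.

Section Teleport.
Variable R : realType.
Local Notation C := (R[i]).

Definition adj {m n} (A : 'M[C]_(m, n)) : 'M[C]_(n, m) := (map_mx conjc A)^T.

Definition density_mx {n} (s : 'M[C]_n) : Prop :=
  [/\ adj s = s,
      (forall v : 'cV[C]_n, 0 <= (adj v *m s *m v) 0 0)
    & \tr s = 1].

Definition unitary_mx {n} (U : 'M[C]_n) : Prop :=
  adj U *m U = 1%:M /\ U *m adj U = 1%:M.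

Definition ket (b : 'I_2) : 'cV[C]_2 := delta_mx b 0.

Definition Xg : 'M[C]_2 := \matrix_(i, j) (i != j)%:R.
Definition Zg : 'M[C]_2 := \matrix_(i, j) ((i == j)%:R * (-1) ^+ (val i)).

Definition XZ (i j : 'I_2) : 'M[C]_2 := Xg ^+ i * Zg ^+ j.

Definition invsqrt2 : C := ((Num.sqrt (2 : R))^-1)%:C.

Definition PhiP : 'cV[C]_(2 * 2) :=
  invsqrt2 *: (ket 0 *t ket 0 + ket 1 *t ket 1).

Definition Phi (i j : 'I_2) : 'cV[C]_(2 * 2) := (XZ i j *t (1%:M : 'M[C]_2)) *m PhiP.

(* <Phi_ij|_{IS} (rho_I (x) sigma_SR) |Phi_ij>_{IS}, an operator on register R.
   Registers ordered I, S, R (I most significant). *)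
Definition proj_IS (sigma : 'M[C]_(2 * 2)) (rho : 'M[C]_2) (i j : 'I_2) : 'M[C]_2 :=
  let P : 'M[C]_(2 * 2 * 2, 1 * 2) := Phi i j *t (1%:M : 'M[C]_2) in
  adj P *m ((rho *t sigma : 'M[C]_(2 * (2 * 2))) : 'M[C]_(2 * 2 * 2)) *m P.

Definition tele (sigma : 'M[C]_(2 * 2)) (rho : 'M[C]_2) : 'M[C]_2 :=
  \sum_(i < 2) \sum_(j < 2) (XZ i j *m proj_IS sigma rho i j *m adj (XZ i j)).

Definition teleU (sigma : 'M[C]_(2 * 2)) (U : 'M[C]_2) (rho : 'M[C]_2) : 'M[C]_2 :=
  adj U *m tele sigma (U *m rho *m adj U) *m U.

Definition expect (psi : 'cV[C]_2) (A : 'M[C]_2) : C := (adj psi *m A *m psi) 0 0.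

Definition ketbra (psi : 'cV[C]_2) : 'M[C]_2 := psi *m adj psi.

Definition expi (t : R) : C := cos t +i* sin t.

Definition ket_plus (t : R) : 'cV[C]_2 := invsqrt2 *: (ket 0 + expi t *: ket 1).

Definition theta_k (k : 'I_8) : R := (k%:R * pi) / 4.

Definition F_dummy (sigma : 'M[C]_(2 * 2)) (U : 'M[C]_2) : C :=
  2^-1 * (expect (ket 0) (teleU sigma U (ketbra (ket 0)))
        + expect (ket 1) (teleU sigma U (ketbra (ket 1)))).

Definition F_trap (sigma : 'M[C]_(2 * 2)) (U : 'M[C]_2) : C :=
  8^-1 * \sum_(k < 8) expect (ket_plus (theta_k k))
                         (teleU sigma U (ketbra (ket_plus (theta_k k)))).

(* Bloch-sphere parametrisation of single-qubit pure states:
   |psi(t,p)> = cos(t/2)|0> + e^{i p} sin(t/2)|1>, t in [0,pi], p in [0,2pi];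
   the Haar (uniform) measure is sin t dt dp / (4 pi). *)
Definition bloch_ket (t p : R) : 'cV[C]_2 :=
  (cos (t / 2))%:C *: ket 0 + (expi p * (sin (t / 2))%:C) *: ket 1.

Definition tele_fid_at (sigma : 'M[C]_(2 * 2)) (t p : R) : R :=
  complex.Re (expect (bloch_ket t p) (tele sigma (ketbra (bloch_ket t p)))).

Definition F_tel (sigma : 'M[C]_(2 * 2)) : R :=
  (4 * pi)^-1 *
  Rintegral lebesgue_measure `[0, pi]%classic
    (fun t => sin t * Rintegral lebesgue_measure `[0, 2 * pi]%classic
                        (fun p => tele_fid_at sigma t p)).

End Teleport.

(* Main.v *)
Require Import Defs.
From HB Require Import structures.
From mathcomp Require Import all_boot all_order all_algebra.
From mathcomp Require Import all_classical all_reals all_analysis.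
From mathcomp Require Import complex mxtens.
From mathcomp Require Import ring lra.
Import GRing.Theory Num.Theory.
Local Open Scope ring_scope.
Local Open Scope complex_scope.


Section Alg.
Variable R : realType.
Local Notation C := (R[i]).
Notation i0 := (@Ordinal 2 0 isT).
Notation i1 := (@Ordinal 2 1 isT).

Lemma ord2 (x : 'I_2) : x = i0 \/ x = i1.
Proof. case: x => [[|[|n]] Hn]; [left|right|by []]; exact: val_inj. Qed.

Lemma sum2 (F : 'I_2 -> C) : \sum_(i < 2) F i = F i0 + F i1.
Proof. rewrite big_ord_recl big_ord1; congr (F _ + F _); exact: val_inj. Qed.

Lemma sum1 (F : 'I_1 -> C) : \sum_(i < 1) F i = F ord0.
Proof. by rewrite big_ord1. Qed.

Lemma sum_tens m n (F : 'I_(m * n) -> C) :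
  \sum_(k < m * n) F k = \sum_(i < m) \sum_(j < n) F (mxtens_index (i, j)).
Proof.
rewrite pair_big /=.
rewrite (reindex (@mxtens_unindex m n)) /=; last first.
  by exists (@mxtens_index m n) => x _; rewrite (mxtens_indexK, mxtens_unindexK).
by apply: eq_bigr => k _; rewrite mxtens_unindexK.
Qed.

Lemma unindex_assoc (a b c : 'I_2) :
  @mxtens_unindex 2 (2 * 2) (@mxtens_index (2 * 2) 2 (mxtens_index (a, b), c))
  = (a, mxtens_index (b, c)).
Proof.
case: (ord2 a) => ->; case: (ord2 b) => ->; case: (ord2 c) => ->;
  congr pair; apply: val_inj => //.
Qed.


Definition xzv (i j x y : nat) : C :=
  ((x == y) != (i == 1%N))%:R * (if j == 1%N then (-1) ^+ y else 1).

Lemma XZE (i j x y : 'I_2) : XZ R i j x y = xzv i j x y.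
Proof.
rewrite /XZ.
case: (ord2 i) => ->; case: (ord2 j) => ->; rewrite /= ?expr0 ?expr1 ?mul1r ?mulr1;
  try rewrite -mulmxE mxE sum2;
  rewrite ?mxE;
  case: (ord2 x) => ->; case: (ord2 y) => ->; rewrite /xzv /= ?mxE /=; ring.
Qed.


Lemma I1E (j : 'I_1) : j = ord0.
Proof. exact: ord1. Qed.

Lemma tensE m n p q (A : 'M[C]_(m, n)) (B : 'M[C]_(p, q)) a b c d :
  (A *t B) (mxtens_index (a, b)) (mxtens_index (c, d)) = A a c * B b d.
Proof. by rewrite mxE !mxtens_indexK. Qed.

Lemma PhiE (i j x y : 'I_2) :
  Phi R i j (mxtens_index (x, y)) 0 = invsqrt2 R * xzv i j x y.
Proof.
rewrite /Phi /PhiP mxE sum_tens.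
rewrite !sum2 !tensE !XZE !mxE /=.
case: (ord2 x) => ->; case: (ord2 y) => ->; rewrite /xzv /= ?mxE /=; ring.
Qed.

Lemma conjcM (x y : C) : @conjc R (x * y) = @conjc R x * @conjc R y.
Proof. exact: rmorphM. Qed.
Lemma conjcD (x y : C) : @conjc R (x + y) = @conjc R x + @conjc R y.
Proof. exact: rmorphD. Qed.

Lemma conjcn (n : nat) : @conjc R (n%:R) = n%:R.
Proof. exact: rmorph_nat. Qed.

Lemma xzv_conj i j x y : @conjc R (xzv i j x y) = xzv i j x y.
Proof.
rewrite /xzv rmorphM rmorph_nat; case: ifP => _; rewrite ?rmorph1 //.
by rewrite rmorphXn rmorphN1.
Qed.

Lemma invsqrt2_conj : @conjc R (invsqrt2 R) = invsqrt2 R.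
Proof. exact: conjc_real. Qed.

Lemma PhiEc (i j x y : 'I_2) :
  @conjc R (Phi R i j (mxtens_index (x, y)) 0) = invsqrt2 R * xzv i j x y.
Proof. by rewrite PhiE conjcM xzv_conj invsqrt2_conj. Qed.

Lemma unindex12 (k : 'I_2) : (@mxtens_unindex 1 2 k).2 = k.
Proof. by case: (ord2 k) => ->; apply: val_inj. Qed.

Lemma tensE1 m p (A : 'M[C]_(m, 1)) (B : 'M[C]_(p, 2)) a b (k : 'I_2) :
  (A *t B) (mxtens_index (a, b)) k = A a 0 * B b k.
Proof.
rewrite mxE mxtens_indexK unindex12 /=.
by rewrite (ord1 (@mxtens_unindex 1 2 k).1).
Qed.

Lemma adjE m n (A : 'M[C]_(m, n)) i j : adj A i j = (A j i)^*.
Proof. by rewrite !mxE. Qed.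

Lemma tens_assocE (rho : 'M[C]_2) (sigma : 'M[C]_(2 * 2)) a b c a' b' c' :
  ((rho *t sigma : 'M[C]_(2 * (2 * 2))) : 'M[C]_(2 * 2 * 2))
    (mxtens_index (mxtens_index (a, b), c))
    (mxtens_index (mxtens_index (a', b'), c')) =
  rho a a' * sigma (mxtens_index (b, c)) (mxtens_index (b', c')).
Proof. by rewrite mxE !unindex_assoc. Qed.

Lemma projE (sigma : 'M[C]_(2 * 2)) (rho : 'M[C]_2) (i j r r' : 'I_2) :
  proj_IS sigma rho i j r r' =
  \sum_(x < 2) \sum_(y < 2) \sum_(x' < 2) \sum_(y' < 2)
    invsqrt2 R * xzv i j x y * rho x x' *
    sigma (mxtens_index (y, r)) (mxtens_index (y', r')) *
    (invsqrt2 R * xzv i j x' y').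
Proof.
rewrite /proj_IS /=.
rewrite mxE sum_tens sum_tens !sum2.
rewrite ![(_ *m _) _ _]mxE.
rewrite !sum_tens !sum2.
rewrite !tensE1 !adjE !tensE1 !tens_assocE.
rewrite !conjcM !PhiEc !PhiE !mxE.
rewrite !conjcn.
case: (ord2 r) => ->; case: (ord2 r') => -> /=; ring.
Qed.
End Alg.

Section Alg2.
Variable R : realType.
Local Notation C := (R[i]).
Notation i0 := (@Ordinal 2 0 isT).
Notation i1 := (@Ordinal 2 1 isT).

Definition Fid (sigma : 'M[C]_(2 * 2)) (phi : 'cV[C]_2) : C :=
  expect phi (tele sigma (ketbra phi)).

Definition sg (sigma : 'M[C]_(2 * 2)) (a b c d : 'I_2) : C :=
  sigma (mxtens_index (a, b)) (mxtens_index (c, d)).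

Definition raw0 sigma := sg sigma i0 i0 i0 i0 + sg sigma i0 i0 i1 i1 + sg sigma i1 i1 i0 i0 + sg sigma i1 i1 i1 i1.
Definition rawz sigma := sg sigma i0 i0 i0 i0 - sg sigma i0 i0 i1 i1 - sg sigma i1 i1 i0 i0 + sg sigma i1 i1 i1 i1.
Definition rawx sigma := sg sigma i0 i1 i0 i1 + sg sigma i0 i1 i1 i0 + sg sigma i1 i0 i0 i1 + sg sigma i1 i0 i1 i0.
Definition rawy sigma := sg sigma i0 i1 i0 i1 - sg sigma i0 i1 i1 i0 - sg sigma i1 i0 i0 i1 + sg sigma i1 i0 i1 i0.

Lemma teleE sigma rho (a b : 'I_2) :
  tele sigma rho a b = \sum_(i < 2) \sum_(j < 2) \sum_(r' < 2)
     (\sum_(r < 2) xzv R i j a r * proj_IS sigma rho i j r r') * xzv R i j b r'.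
Proof.
rewrite /tele !summxE; apply: eq_bigr => i _; rewrite !summxE; apply: eq_bigr => j _.
rewrite mxE; apply: eq_bigr => r' _; rewrite mxE adjE XZE xzv_conj; congr (_ * _).
by apply: eq_bigr => r _; rewrite XZE.
Qed.

Lemma projE2 (sigma : 'M[C]_(2 * 2)) (rho : 'M[C]_2) (i j r r' : 'I_2) :
  let pe (x y x' y' : 'I_2) := invsqrt2 R * xzv R i j x y * rho x x' *
    sigma (mxtens_index (y, r)) (mxtens_index (y', r')) *
    (invsqrt2 R * xzv R i j x' y') in
  proj_IS sigma rho i j r r' = pe i0 i0 i0 i0 + pe i0 i0 i0 i1 + pe i0 i0 i1 i0 + pe i0 i0 i1 i1 + pe i0 i1 i0 i0 + pe i0 i1 i0 i1 + pe i0 i1 i1 i0 + pe i0 i1 i1 i1 + pe i1 i0 i0 i0 + pe i1 i0 i0 i1 + pe i1 i0 i1 i0 + pe i1 i0 i1 i1 + pe i1 i1 i0 i0 + pe i1 i1 i0 i1 + pe i1 i1 i1 i0 + pe i1 i1 i1 i1.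
Proof. by rewrite /= projE !sum2 !addrA. Qed.

Lemma tele00 sigma rho : tele sigma rho i0 i0 = invsqrt2 R * invsqrt2 R *
  ((raw0 sigma + rawz sigma) * rho i0 i0 + (rawx sigma + rawy sigma) * rho i1 i1).
Proof.
rewrite teleE !sum2.
have P := @projE2 sigma rho; move: (proj_IS sigma rho) P => M P.
rewrite !P /raw0 /rawx /rawy /rawz /sg /xzv /=.
ring.
Qed.

Lemma tele01 sigma rho : tele sigma rho i0 i1 = invsqrt2 R * invsqrt2 R *
  ((raw0 sigma - rawz sigma) * rho i0 i1 + (rawx sigma - rawy sigma) * rho i1 i0).
Proof.
rewrite teleE !sum2.
have P := @projE2 sigma rho; move: (proj_IS sigma rho) P => M P.
rewrite !P /raw0 /rawx /rawy /rawz /sg /xzv /=.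
ring.
Qed.

Lemma tele10 sigma rho : tele sigma rho i1 i0 = invsqrt2 R * invsqrt2 R *
  ((raw0 sigma - rawz sigma) * rho i1 i0 + (rawx sigma - rawy sigma) * rho i0 i1).
Proof.
rewrite teleE !sum2.
have P := @projE2 sigma rho; move: (proj_IS sigma rho) P => M P.
rewrite !P /raw0 /rawx /rawy /rawz /sg /xzv /=.
ring.
Qed.

Lemma tele11 sigma rho : tele sigma rho i1 i1 = invsqrt2 R * invsqrt2 R *
  ((raw0 sigma + rawz sigma) * rho i1 i1 + (rawx sigma + rawy sigma) * rho i0 i0).
Proof.
rewrite teleE !sum2.
have P := @projE2 sigma rho; move: (proj_IS sigma rho) P => M P.
rewrite !P /raw0 /rawx /rawy /rawz /sg /xzv /=.
ring.
Qed.

Lemma FidE sigma (phi : 'cV[C]_2) :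
  let a := phi i0 0 in let b := phi i1 0 in
  Fid sigma phi = invsqrt2 R * invsqrt2 R *
   (raw0 sigma * (a^*%C * a + b^*%C * b)^+2 + rawx sigma * (a^*%C * b + b^*%C * a)^+2
    - rawy sigma * (b^*%C * a - a^*%C * b)^+2 + rawz sigma * (a^*%C * a - b^*%C * b)^+2).
Proof.
rewrite /Fid /expect /=.
have T00 := tele00 sigma (ketbra phi); have T01 := tele01 sigma (ketbra phi).
have T10 := tele10 sigma (ketbra phi); have T11 := tele11 sigma (ketbra phi).
move: (tele sigma (ketbra phi)) T00 T01 T10 T11 => T T00 T01 T10 T11.
rewrite mxE sum2 ![(_ *m _) _ _]mxE !sum2 !adjE T00 T01 T10 T11 /ketbra.
rewrite ![(_ *m _) _ _]mxE !sum1 !adjE.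
ring.
Qed.
End Alg2.

Arguments raw0 {R}. Arguments rawx {R}. Arguments rawy {R}. Arguments rawz {R}.
Arguments Fid {R}. Arguments sg {R}.
Section Alg3.
Variable R : realType.
Local Notation C := (R[i]).
Notation i0 := (@Ordinal 2 0 isT).
Notation i1 := (@Ordinal 2 1 isT).

Lemma rcD (x y : R) : (x + y)%:C = x%:C + y%:C :> C.
Proof. by apply/eqP; rewrite eq_complex /= addr0 !eqxx. Qed.
Lemma rcM (x y : R) : (x * y)%:C = x%:C * y%:C :> C.
Proof. by apply/eqP; rewrite eq_complex /= !mulr0 mul0r subr0 addr0 !eqxx. Qed.
Lemma rcN (x : R) : (- x)%:C = - x%:C :> C.
Proof. by apply/eqP; rewrite eq_complex /= oppr0 !eqxx. Qed.
Lemma rcB (x y : R) : (x - y)%:C = x%:C - y%:C :> C.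
Proof. by rewrite rcD rcN. Qed.
Lemma rcX (x : R) n : (x ^+ n)%:C = x%:C ^+ n :> C.
Proof. by elim: n => [|n IH]; rewrite ?expr0 // !exprS rcM IH. Qed.
Lemma rc1 : (1 : R)%:C = 1 :> C. Proof. by []. Qed.
Lemma rcn n : (n%:R : R)%:C = n%:R :> C.
Proof. by elim: n => [|n IH]; rewrite // -addn1 !natrD rcD IH. Qed.

Lemma conjcN (x : C) : @conjc R (- x) = - @conjc R x.
Proof. exact: rmorphN. Qed.

Lemma realC (x : C) : (@conjc R x = x :> C) -> x = (complex.Re x)%:C.
Proof.
case: x => a b /= [] H; congr Complex.
lra.
Qed.

Lemma herm_entry (sigma : 'M[C]_(2 * 2)) i j :
  adj sigma = sigma -> @conjc R (sigma i j) = sigma j i.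
Proof. by move=> /matrixP /(_ j i); rewrite !mxE. Qed.

Lemma raw_real (sigma : 'M[C]_(2 * 2)) : adj sigma = sigma ->
  [/\ raw0 sigma = (complex.Re (raw0 sigma))%:C, rawx sigma = (complex.Re (rawx sigma))%:C,
      rawy sigma = (complex.Re (rawy sigma))%:C & rawz sigma = (complex.Re (rawz sigma))%:C].
Proof.
move=> H; split; apply: realC;
rewrite /raw0 /rawx /rawy /rawz /sg ?conjcD ?conjcB !herm_entry //; rewrite ?conjcN ?herm_entry //; ring.
Qed.

Lemma invsqrt2_sq : invsqrt2 R * invsqrt2 R = (2^-1)%:C.
Proof.
rewrite /invsqrt2 -rcM; congr (_%:C).
by rewrite -invfM -expr2 sqr_sqrtr.
Qed.

Lemma Hi : 'i * 'i = -1 :> C.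
Proof. apply/eqP; rewrite eq_complex /=; apply/andP; split; apply/eqP; ring. Qed.

Lemma FidR (sigma : 'M[C]_(2 * 2)) (phi : 'cV[C]_2) (ni nx ky nz : R) :
  adj sigma = sigma ->
  (phi i0 0)^*%C * phi i0 0 + (phi i1 0)^*%C * phi i1 0 = ni%:C ->
  (phi i0 0)^*%C * phi i1 0 + (phi i1 0)^*%C * phi i0 0 = nx%:C ->
  (phi i1 0)^*%C * phi i0 0 - (phi i0 0)^*%C * phi i1 0 = 'i * ky%:C ->
  (phi i0 0)^*%C * phi i0 0 - (phi i1 0)^*%C * phi i1 0 = nz%:C ->
  Fid sigma phi = (2^-1 * (complex.Re (raw0 sigma) * ni^+2 + complex.Re (rawx sigma) * nx^+2
     + complex.Re (rawy sigma) * ky^+2 + complex.Re (rawz sigma) * nz^+2))%:C.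
Proof.
move=> H HI HX HK HZ.
rewrite FidE /= HI HX HK HZ invsqrt2_sq.
case: (@raw_real sigma H) => -> -> -> ->.
rewrite !(rcD, rcM, rcX).
have Hi' := Hi.
ring: Hi'.
Qed.

End Alg3.

Section Alg4.
Variable R : realType.
Local Notation C := (R[i]).
Notation i0 := (@Ordinal 2 0 isT).
Notation i1 := (@Ordinal 2 1 isT).

Lemma adj_mul m n p (A : 'M[C]_(m, n)) (B : 'M[C]_(n, p)) :
  adj (A *m B) = adj B *m adj A.
Proof. by rewrite /adj map_mxM trmx_mul. Qed.

Lemma expect_teleU sigma (U : 'M[C]_2) psi :
  expect psi (teleU sigma U (ketbra psi)) = Fid sigma (U *m psi).
Proof.
by rewrite /teleU /Fid /expect /ketbra adj_mul !mulmxA.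
Qed.

Lemma conj_rc (x : R) : @conjc R (x%:C) = x%:C.
Proof. exact: conjc_real. Qed.
Lemma conj_i : @conjc R 'i = - 'i.
Proof. by apply/eqP; rewrite eq_complex /= oppr0 !eqxx. Qed.
Lemma conjcB (x y : C) : @conjc R (x - y) = @conjc R x - @conjc R y.
Proof. exact: rmorphB. Qed.
Lemma cplxE (x y : R) : x +i* y = x%:C + 'i * y%:C :> C.
Proof. apply/eqP; rewrite eq_complex /=; apply/andP; split; apply/eqP; ring. Qed.

Definition Umx (c d : R) : 'M[C]_2 := \matrix_(i, j)
  (if (i : nat) == 0%N then (if (j : nat) == 0%N then c%:C else (- d)%:C + 'i * d%:C)
   else (if (j : nat) == 0%N then d%:C + 'i * d%:C else c%:C)).

Lemma Uent c d :
  [/\ Umx c d i0 i0 = c%:C, Umx c d i0 i1 = (- d)%:C + 'i * d%:C,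
      Umx c d i1 i0 = d%:C + 'i * d%:C & Umx c d i1 i1 = c%:C].
Proof. by rewrite !mxE. Qed.
Lemma i01 : (i0 == i1) = false. Proof. by []. Qed.
Lemma i10 : (i1 == i0) = false. Proof. by []. Qed.

Lemma bt : (true%:R : C) = 1. Proof. by []. Qed.
Lemma bf : (false%:R : C) = 0. Proof. by []. Qed.

Ltac cpl := rewrite ?(conjcD, conjcB, conjcM, conjcN, conj_rc, conj_i);
  rewrite ?(rcD, rcB, rcM, rcN, rcX, rcn); have Hi' := @Hi R.

Lemma Umx_unitary (c d : R) : c ^+ 2 + 2 * d ^+ 2 = 1 -> unitary_mx (Umx c d).
Proof.
move=> H.
have Hc : c%:C ^+ 2 = 1 - 2 * d%:C ^+ 2 :> C.
  have -> : (1 : C) = (1 : R)%:C by [].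
  by rewrite -rcX -[2]rcn -rcX -rcM -rcB; congr (_%:C); lra.
case: (Uent c d) => U00 U01 U10 U11.
split; apply/matrixP => i j; rewrite [LHS]mxE sum2 !adjE;
  case: (ord2 i) => ->; case: (ord2 j) => ->; rewrite ?U00 ?U01 ?U10 ?U11 !mxE ?eqxx ?i01 ?i10; rewrite ?bt ?bf; cpl; ring: Hi' Hc.
Qed.

Lemma Uket (M : 'M[C]_2) (b x : 'I_2) : (M *m ket R b) x 0 = M x b.
Proof.
rewrite mxE sum2 !mxE; case: (ord2 b) => ->; rewrite ?eqxx ?i01 ?i10 /=; ring.
Qed.

Lemma z0 : (0 : 'I_2) = i0. Proof. exact: val_inj. Qed.
Lemma z1 : (1 : 'I_2) = i1. Proof. exact: val_inj. Qed.

Lemma rcV2 : (2^-1 : C) = (2^-1 : R)%:C.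
Proof. by rewrite -[2 : R]/(2%:R) fmorphV /= -[2 : C]rcn. Qed.
Lemma rcV8 : (8^-1 : C) = (8^-1 : R)%:C.
Proof. by rewrite -[8 : R]/(8%:R) fmorphV /= -[8 : C]rcn. Qed.

Definition target (sigma : 'M[C]_(2 * 2)) : R :=
  2^-1 * (complex.Re (raw0 sigma) + (complex.Re (rawx sigma) + complex.Re (rawy sigma) + complex.Re (rawz sigma)) / 3).

Lemma dummyE sigma c d : adj sigma = sigma -> c ^+ 2 + 2 * d ^+ 2 = 1 -> c ^+ 2 * d ^+ 2 = 12^-1 ->
  F_dummy sigma (Umx c d) = (target sigma)%:C.
Proof.
move=> Hs H1 H2.
case: (Uent c d) => U00 U01 U10 U11.
rewrite /F_dummy !expect_teleU z0 z1.
rewrite (@FidR R sigma (Umx c d *m ket R i0) (c^+2+2*d^+2) (2*c*d) (-(2*c*d)) (c^+2-2*d^+2)) //;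
  try by (rewrite !Uket U00 U10; cpl; ring: Hi').
rewrite (@FidR R sigma (Umx c d *m ket R i1) (c^+2+2*d^+2) (-(2*c*d)) (2*c*d) (2*d^+2-c^+2)) //;
  try by (rewrite !Uket U01 U11; cpl; ring: Hi').
rewrite rcV2 -rcD -rcM /target; congr (_%:C).
rewrite H1 !sqrrN.
have E : (2 * c * d) ^+ 2 = 3^-1 by rewrite !exprMn -mulrA H2; lra.
have E2 : (c^+2 - 2*d^+2)^+2 = (c^+2+2*d^+2)^+2 - 8*(c^+2*d^+2) by ring.
have E3 : (2*d^+2 - c^+2)^+2 = (c^+2+2*d^+2)^+2 - 8*(c^+2*d^+2) by ring.
rewrite E E2 E3 H1 H2; lra.
Qed.

End Alg4.
Import Order.TTheory.
Arguments Umx {R}. Arguments target {R}.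

Section Alg5.
Variable R : realType.
Local Notation C := (R[i]).
Notation i0 := (@Ordinal 2 0 isT).
Notation i1 := (@Ordinal 2 1 isT).

Ltac cpl := rewrite ?(conjcD, conjcB, conjcM, conjcN, conj_rc, conj_i);
  rewrite ?(rcD, rcB, rcM, rcN, rcX, rcn); have Hi' := @Hi R.

Definition s2 : R := (Num.sqrt 2)^-1.

Lemma s2sq : s2 ^+ 2 = 2^-1.
Proof. by rewrite /s2 exprVn sqr_sqrtr. Qed.

Lemma kpE (t : R) : ket_plus t i0 0 = s2%:C /\ ket_plus t i1 0 = s2%:C * ((cos t)%:C + 'i * (sin t)%:C).
Proof.
rewrite /ket_plus /expi !mxE cplxE /= /invsqrt2 -/s2 ?eqxx ?i01 ?i10 /=; split; ring.
Qed.

Lemma trapk sigma c d (t : R) : adj sigma = sigma -> c ^+ 2 + 2 * d ^+ 2 = 1 ->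
  Fid sigma (Umx c d *m ket_plus t) =
  (2^-1 * (complex.Re (raw0 sigma)
    + complex.Re (rawx sigma) * (c^+2 * cos t + (- (2 * d^+2)) * sin t) ^+ 2
    + complex.Re (rawy sigma) * ((2 * d^+2) * cos t + (- c^+2) * sin t) ^+ 2
    + complex.Re (rawz sigma) * ((- (2 * c * d)) * cos t + (- (2 * c * d)) * sin t) ^+ 2))%:C.
Proof.
move=> Hs H1.
case: (@Uent R c d) => U00 U01 U10 U11.
case: (kpE t) => K0 K1.
have P0 : (Umx c d *m ket_plus t) i0 0 = c%:C * s2%:C + ((- d)%:C + 'i * d%:C) * (s2%:C * ((cos t)%:C + 'i * (sin t)%:C)).
  by rewrite mxE sum2 U00 U01 K0 K1.
have P1 : (Umx c d *m ket_plus t) i1 0 = (d%:C + 'i * d%:C) * s2%:C + c%:C * (s2%:C * ((cos t)%:C + 'i * (sin t)%:C)).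
  by rewrite mxE sum2 U10 U11 K0 K1.
rewrite (@FidR R sigma (Umx c d *m ket_plus t)
   (s2^+2 * (c^+2 + 2 * d^+2) * (1 + (cos t ^+ 2 + sin t ^+ 2)))
   (2 * s2^+2 * (c * d * (1 - (cos t ^+ 2 + sin t ^+ 2)) + c^+2 * cos t - 2 * d^+2 * sin t))
   (2 * s2^+2 * (c * d * ((cos t ^+ 2 + sin t ^+ 2) - 1) - c^+2 * sin t + 2 * d^+2 * cos t))
   (s2^+2 * ((c^+2 - 2 * d^+2) * (1 - (cos t ^+ 2 + sin t ^+ 2)) - 4 * c * d * (cos t + sin t)))) //;
  try by (rewrite P0 P1; cpl; ring: Hi').
congr (_%:C).
rewrite cos2Dsin2 s2sq H1.
by field.
Qed.

Lemma sum8 (F : 'I_8 -> R) : \sum_(k < 8) F k =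
  F (@Ordinal 8 0 isT) + F (@Ordinal 8 1 isT) + F (@Ordinal 8 2 isT) + F (@Ordinal 8 3 isT) +
  F (@Ordinal 8 4 isT) + F (@Ordinal 8 5 isT) + F (@Ordinal 8 6 isT) + F (@Ordinal 8 7 isT).
Proof.
rewrite !big_ord_recl big_ord0 addr0 !addrA.
by repeat (congr (_ + _)); congr F; apply: val_inj.
Qed.

Lemma trig8 (X Y : R) :
  \sum_(k < 8) (X * cos (theta_k R k) + Y * sin (theta_k R k)) ^+ 2 = 4 * (X ^+ 2 + Y ^+ 2).
Proof.
rewrite sum8 /theta_k /=.
have -> : 0 * pi / 4 = 0 :> R by rewrite mul0r mul0r.
have -> : 1 * pi / 4 = pi / 4 :> R by rewrite mul1r.
have -> : 2 * pi / 4 = pi / 2 :> R by field.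
have -> : 3 * pi / 4 = pi / 4 + pi / 2 :> R by field.
have -> : 4 * pi / 4 = pi :> R by field.
have -> : 5 * pi / 4 = pi / 4 + pi :> R by field.
have -> : 6 * pi / 4 = pi / 2 + pi :> R by field.
have -> : 7 * pi / 4 = (pi / 4 + pi / 2) + pi :> R by field.
rewrite !cosDpi !sinDpi !cosDpihalf !sinDpihalf cos_pihalf sin_pihalf cos0 sin0 cospi sinpi.
have H := cos2sin2 (pi / 4 : R).
ring: H.
Qed.

Lemma rc_sum n (f : 'I_n -> R) : (\sum_(k < n) f k)%:C = \sum_(k < n) (f k)%:C :> C.
Proof.
elim/big_rec2 : _ => [|k x y _ <-]; first by [].
by rewrite rcD.
Qed.

Lemma trapE sigma (c d : R) : adj sigma = sigma -> c ^+ 2 + 2 * d ^+ 2 = 1 -> c ^+ 2 * d ^+ 2 = 12^-1 ->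
  F_trap sigma (Umx c d) = (target sigma)%:C.
Proof.
move=> Hs H1 H2.
rewrite /F_trap.
set q0 := complex.Re (raw0 sigma). set qx := complex.Re (rawx sigma).
set qy := complex.Re (rawy sigma). set qz := complex.Re (rawz sigma).
under eq_bigr => k _ do rewrite expect_teleU trapk //.
rewrite -rc_sum rcV8 -rcM /target; congr (_%:C).
rewrite -/q0 -/qx -/qy -/qz.
set A := fun t : R => (c^+2 * cos t + (- (2 * d^+2)) * sin t) ^+ 2.
set B := fun t : R => ((2 * d^+2) * cos t + (- c^+2) * sin t) ^+ 2.
set D := fun t : R => ((- (2 * c * d)) * cos t + (- (2 * c * d)) * sin t) ^+ 2.
have -> : \sum_(k < 8) 2^-1 * (q0 + qx * A (theta_k R k) + qy * B (theta_k R k) + qz * D (theta_k R k))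
  = 2^-1 * (8 * q0 + qx * \sum_(k < 8) A (theta_k R k) + qy * \sum_(k < 8) B (theta_k R k)
            + qz * \sum_(k < 8) D (theta_k R k)).
  by rewrite !sum8; ring.
rewrite /A /B /D !trig8.
have E1 : (c^+2)^+2 + (- (2 * d^+2))^+2 = (c^+2 + 2 * d^+2)^+2 - 4 * (c^+2 * d^+2) by ring.
have E2 : (2 * d^+2)^+2 + (- c^+2)^+2 = (c^+2 + 2 * d^+2)^+2 - 4 * (c^+2 * d^+2) by ring.
have E3 : (- (2 * c * d))^+2 + (- (2 * c * d))^+2 = 8 * (c^+2 * d^+2) by ring.
rewrite E1 E2 E3 H1 H2.
lra.
Qed.

Lemma cd_exists : exists c d : R, c ^+ 2 + 2 * d ^+ 2 = 1 /\ c ^+ 2 * d ^+ 2 = 12^-1.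
Proof.
set w := Num.sqrt (3 : R).
have w1 : 1 <= w by rewrite -sqrtr1 ler_sqrt //; lra.
have w0 : 0 < w by lra.
set x := w^-1.
have x0 : 0 <= x by rewrite invr_ge0 ltW.
have x1 : x <= 1 by rewrite invf_le1.
have Hx : x ^+ 2 = 3^-1 by rewrite /x exprVn sqr_sqrtr //; lra.
exists (Num.sqrt ((1 + x) / 2)), (Num.sqrt ((1 - x) / 4)).
have Hc : Num.sqrt ((1 + x) / 2) ^+ 2 = (1 + x) / 2 by rewrite sqr_sqrtr //; lra.
have Hd : Num.sqrt ((1 - x) / 4) ^+ 2 = (1 - x) / 4 by rewrite sqr_sqrtr //; lra.
rewrite Hc Hd; split; first lra.
have -> : (1 + x) / 2 * ((1 - x) / 4) = (1 - x ^+ 2) / 8 by field.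
rewrite Hx; field. all: try lra.
Qed.

Lemma fidat sigma (t p : R) : adj sigma = sigma ->
  tele_fid_at sigma t p = 2^-1 * (complex.Re (raw0 sigma)
    + complex.Re (rawx sigma) * (sin t * cos p) ^+ 2
    + complex.Re (rawy sigma) * (sin t * sin p) ^+ 2
    + complex.Re (rawz sigma) * (cos t) ^+ 2).
Proof.
move=> Hs.
rewrite /tele_fid_at (_ : expect _ _ = Fid sigma (bloch_ket t p)) //.
have B0 : bloch_ket t p i0 0 = (cos (t / 2))%:C.
  by rewrite /bloch_ket !mxE ?eqxx ?i01 ?i10 /=; ring.
have B1 : bloch_ket t p i1 0 = ((cos p)%:C + 'i * (sin p)%:C) * (sin (t / 2))%:C.
  by rewrite /bloch_ket !mxE ?eqxx ?i01 ?i10 /= /expi cplxE; ring.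
rewrite (@FidR R sigma (bloch_ket t p)
   (cos (t/2) ^+ 2 + sin (t/2) ^+ 2 * (cos p ^+ 2 + sin p ^+ 2))
   (2 * cos (t/2) * sin (t/2) * cos p)
   (- (2 * cos (t/2) * sin (t/2) * sin p))
   (cos (t/2) ^+ 2 - sin (t/2) ^+ 2 * (cos p ^+ 2 + sin p ^+ 2))) //;
  try by (rewrite B0 B1; cpl; ring: Hi').
rewrite /= cos2Dsin2 !mulr1.
have ht : t = t / 2 + t / 2 by field.
have -> : sin t = 2 * cos (t/2) * sin (t/2) by rewrite {1}ht sinD; ring.
have -> : cos t = cos (t/2) ^+ 2 - sin (t/2) ^+ 2 by rewrite {1}ht cosD; ring.
rewrite cos2Dsin2.
have H := sin2cos2 (t / 2).
ring: H.
Qed.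

End Alg5.

Section Integ.
Variable R : realType.
Import numFieldNormedType.Exports.
Local Open Scope classical_set_scope.

Lemma RFTC (f F : R -> R) (a b : R) : a < b ->
  (forall x : R, derivable f x 1) -> (forall x : R, derivable F x 1 /\ 'D_1 F x = f x) ->
  Rintegral lebesgue_measure `[a, b] f = F b - F a.
Proof.
move=> ab df dF'.
have dF : forall x : R, is_derive x 1 F (f x).
  by move=> x; case: (dF' x) => h1 h2; apply: DeriveDef.
have cF : forall x : R, F y @[y --> x] --> F x.
  move=> x; apply: differentiable_continuous; rewrite -derivable1_diffP.
  exact: ex_derive.
rewrite /Rintegral (@continuous_FTC2 R f F a b ab).
- by rewrite -EFinB.
- apply: continuous_subspaceT => x.
  by apply: differentiable_continuous; rewrite -derivable1_diffP.
- split.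
  + by move=> x _; exact: ex_derive.
  + exact/cvg_at_right_filter/cF.
  + exact/cvg_at_left_filter/cF.
- by move=> x _; rewrite derive1E derive_val.
Qed.

Lemma two_pi : 2 * pi = pi *+ 2 :> R.
Proof. by rewrite mulr_natl. Qed.

Lemma inner_int (q0 qx qy qz st ct : R) :
  Rintegral lebesgue_measure `[0, 2 * pi]
    (fun p => 2^-1 * (q0 + qx * (st * cos p) ^+ 2 + qy * (st * sin p) ^+ 2 + qz * ct ^+ 2))
  = 2 * pi * (2^-1 * (q0 + qx * st ^+ 2 / 2 + qy * st ^+ 2 / 2 + qz * ct ^+ 2)).
Proof.
set k0 := 2^-1 * (q0 + qz * ct ^+ 2).
set kc := 2^-1 * (qx * st ^+ 2).
set ks := 2^-1 * (qy * st ^+ 2).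
have -> : (fun p => 2^-1 * (q0 + qx * (st * cos p) ^+ 2 + qy * (st * sin p) ^+ 2 + qz * ct ^+ 2))
   = (cst k0 + cst kc * (cos * cos) + cst ks * (sin * sin) : R -> R).
  by apply/funext => p; rewrite !fctE /k0 /kc /ks; ring.
set k1 := 2^-1 * (q0 + qx * st ^+ 2 / 2 + qy * st ^+ 2 / 2 + qz * ct ^+ 2).
set k2 := 2^-1 * (qx - qy) * st ^+ 2 / 2.
rewrite (@RFTC _ (cst k1 * id + cst k2 * (sin * cos) : R -> R)).
- rewrite !fctE /= two_pi sin2pi sin0; ring.
- by rewrite mulr_gt0 // pi_gt0.
- by move=> x; exact: ex_derive.
- move=> x; split; first exact: ex_derive.
  rewrite derive_val.
  rewrite !fctE /= -![_ *: _]/(_ * _).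
  have H := sin2cos2 x.
  rewrite /k0 /kc /ks /k1 /k2.
  by field: H.
Qed.

Lemma outer_int (q0 qx qy qz : R) :
  Rintegral lebesgue_measure `[0, pi]
    (fun t => sin t * (2 * pi * (2^-1 * (q0 + qx * sin t ^+ 2 / 2 + qy * sin t ^+ 2 / 2 + qz * cos t ^+ 2))))
  = 4 * pi * (2^-1 * (q0 + (qx + qy + qz) / 3)).
Proof.
set a := pi * (q0 + (qx + qy) / 2).
set b := pi * (qz - (qx + qy) / 2).
have -> : (fun t => sin t * (2 * pi * (2^-1 * (q0 + qx * sin t ^+ 2 / 2 + qy * sin t ^+ 2 / 2 + qz * cos t ^+ 2))))
   = (cst a * sin + cst b * (sin * cos * cos) : R -> R).
  apply/funext => t; rewrite !fctE /a /b.
  have H := sin2cos2 t.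
  by field: H.
rewrite (@RFTC _ (cst (- a) * cos + cst (- b / 3) * (cos * cos * cos) : R -> R)).
- rewrite !fctE /= cospi cos0 /a /b; by field.
- exact: pi_gt0.
- by move=> x; exact: ex_derive.
- move=> x; split; first exact: ex_derive.
  rewrite derive_val.
  rewrite !fctE /= -![_ *: _]/(_ * _).
  by field.
Qed.

End Integ.

Arguments RFTC {R}. 
Lemma Ftel_val (R : realType) (sigma : 'M[R[i]]_(2 * 2)) : adj sigma = sigma ->
  F_tel sigma = target sigma.
Proof.
move=> Hs.
rewrite /F_tel /target.
set q0 := complex.Re (raw0 sigma). set qx := complex.Re (rawx sigma).
set qy := complex.Re (rawy sigma). set qz := complex.Re (rawz sigma).
have -> : (fun t => sin t * Rintegral lebesgue_measure `[0, 2 * pi]%classic (fun p => tele_fid_at sigma t p))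
  = (fun t => sin t * (2 * pi * (2^-1 * (q0 + qx * sin t ^+ 2 / 2 + qy * sin t ^+ 2 / 2 + qz * cos t ^+ 2)))).
  apply/funext => t; congr (_ * _).
  rewrite -inner_int; congr (Rintegral _ _ _).
  by apply/funext => p; rewrite fidat.
rewrite outer_int.
have pi0 : pi != 0 :> R by rewrite gt_eqF // pi_gt0.
by rewrite mulKf // mulf_neq0.
Qed.

Theorem lemma4 (R : realType) (sigma : 'M[R[i]]_(2 * 2)) :
  density_mx sigma ->
  exists U : 'M[R[i]]_2,
    unitary_mx U /\
    F_dummy sigma U = F_trap sigma U /\
    F_trap sigma U = (F_tel sigma)%:C.
Proof.
case=> Hs _ _.
case: (@cd_exists R) => c [d [H1 H2]].
exists (Umx c d); split; first exact: Umx_unitary.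
rewrite (@dummyE R sigma c d Hs H1 H2) (@trapE R sigma c d Hs H1 H2) Ftel_val //.
Qed.
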